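(* Let $F$ be a field of characteristic zero and let $\mathcal{Z}=\langle z\rangle$ be the infinite cyclic group. The only Schur rings over $\mathcal{Z}$ are the group ring $F[\mathcal{Z}]$ and the symmetric Schur ring $F[\mathcal{Z}]^{\pm}$.
   Context: For finite $C\subseteq G$, $\overline{C}=\sum_{g\in C}g\in F[G]$ and $C^*=\{g^{-1}\mid g\in C\}$. A Schur ring over a group $G$ is an $F$-subspace $\mathfrak{S}=\operatorname{Span}_F\{\overline{C}\mid C\in\mathcal{D}(\mathfrak{S})\}$ of $F[G]$ where $\mathcal{D}(\mathfrak{S})$ is a partition of $G$ into finite sets such that (i) $\{1\}\in\mathcal{D}(\mathfrak{S})$; (ii) $C\in\mathcal{D}(\mathfrak{S})\Rightarrow C^*\in\mathcal{D}(\mathfrak{S})$; (iii) for all $C,D\in\mathcal{D}(\mathfrak{S})$, $\overline{C}\,\overline{D}=\sum_{E}\lambda_{CDE}\overline{E}$ with finitely many nonzero $\lambda_{CDE}\in F$. The group ring $F[G]$ is the Schur ring with partition into singletons. For abelian $G$, the symmetric Schur ring $F[G]^{\pm}$ is the Schur ring with partition $\{\{g,g^{-1}\}\mid g\in G\}$. *)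

(* Defs.v *)
(* The infinite cyclic group Z = <z> is modelled additively
   as int (z^n <-> n). Finite subsets of Z are {fset int}. *)
From HB Require Import structures.
From mathcomp Require Import all_boot all_order all_algebra.
From mathcomp Require Export finmap.
Set Implicit Arguments. Unset Strict Implicit. Unset Printing Implicit Defensive.
Import Order.TTheory GRing.Theory Num.Theory.
Local Open Scope ring_scope.
Local Open Scope fset_scope.

Section SchurDefs.
Variable F : fieldType.

(* coefficient of g in \overline{C} = sum_{c in C} c *)
Definition setsum (C : {fset int}) (g : int) : F := (g \in C)%:R.

(* coefficient of g in \overline{C} \overline{D} in F[Z] *)
Definition setsum_mul (C D : {fset int}) (g : int) : F :=
  \sum_(c <- C) \sum_(d <- D) ((c + d == g)%:R : F).

Definition fset_inv (C : {fset int}) : {fset int} := [fset - c | c in C].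

Definition is_schur_partition (D : {fset int} -> Prop) : Prop :=
      (forall C, D C -> C != fset0) /\
      (forall g : int, exists C, D C /\ g \in C) /\
      (forall C C' g, D C -> D C' -> g \in C -> g \in C' -> C = C') /\
      D [fset 0%R] /\
      (forall C, D C -> D (fset_inv C)) /\
      (forall C C', D C -> D C' ->
          exists (s : seq {fset int}) (lam : {fset int} -> F),
            (forall E, E \in s -> D E) /\
            forall g, setsum_mul C C' g = \sum_(E <- s) lam E * setsum E g).

End SchurDefs.

Definition group_ring_partition (C : {fset int}) : Prop :=
  exists g : int, C = [fset g]%fset.

Definition symmetric_partition (C : {fset int}) : Prop :=
  exists g : int, C = [fset g; - g]%fset.

(* Main.v *)
Set Warnings "-all".
Require Import Defs.
From HB Require Import structures.
From mathcomp Require Import all_boot all_order all_algebra all_field finmap.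
From mathcomp Require Import zify ring lra.
Set Implicit Arguments. Unset Strict Implicit. Unset Printing Implicit Defensive.
Import Order.TTheory GRing.Theory Num.Theory.
Local Open Scope fset_scope.
Local Open Scope ring_scope.

Fixpoint pwn (C : {fset int}) (k : nat) (g : int) : nat :=
  match k with 0 => nat_of_bool (g == 0) | k'.+1 => (\sum_(c <- C) pwn C k' (g - c))%N end.

Lemma sum_eq_mem (R : nzSemiRingType) (s : seq int) a :
  uniq s -> \sum_(x <- s) ((x == a)%:R : R) = (a \in s)%:R.
Proof.
elim: s => [|x s IH] /=; first by rewrite big_nil.
case/andP=> xs us; rewrite big_cons IH // in_cons eq_sym.
case: eqP => [->|_]; last by rewrite add0r.
by rewrite (negPf xs) addr0.
Qed.

Lemma exN (s : seq int) : exists N : nat, forall c, c \in s -> - (N%:Z) <= c.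
Proof.
elim: s => [|x s [N HN]]; first by exists 0%N.
exists (N + absz x)%N => c; rewrite in_cons => /orP[/eqP->|/HN h].
  rewrite PoszD opprD. have := lez_abs x. lia.
rewrite PoszD opprD. have : 0 <= Posz (absz x) by []. lia.
Qed.

Lemma pwn_supp (C : {fset int}) (N : nat) : (forall c, c \in C -> - (N%:Z) <= c) ->
  forall k g, g < - ((k * N)%N%:Z) -> pwn C k g = 0%N.
Proof.
move=> HN; elim=> [|k IH] g /= hg.
  by move: hg; rewrite mul0n oppr0; case: eqP => // ->.
apply/eqP; rewrite sum_nat_seq_eq0; apply/allP => c cC /=.
apply/eqP/IH. have := HN c cC. move: hg; rewrite mulSn PoszD opprD. lia.
Qed.

Lemma coefQk (R : nzRingType) (C : {fset int}) (N : nat) : (forall c, c \in C -> - (N%:Z) <= c) ->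
  forall k i, ((\sum_(c <- C) 'X^(absz (c + N%:Z)) : {poly R}) ^+ k)`_i
      = (pwn C k (i%:Z - (k * N)%N%:Z))%:R.
Proof.
move=> HN; elim=> [|k IH] i.
  by rewrite expr0 coef1 mul0n subr0 /=; case: i.
rewrite exprS mulr_suml coef_sum /= natr_sum.
apply: eq_big_seq => c cC.
have hc := HN c cC.
have nc : (absz (c + N%:Z))%:Z = c + N%:Z by rewrite gez0_abs //; lia.
rewrite coefXnM; case: ltnP => hi.
  rewrite (pwn_supp HN) //.
  have : (i%:Z < (absz (c + N%:Z))%:Z) by rewrite ltz_nat.
  rewrite nc mulSn PoszD. lia.
move: nc hi; set n := absz (c + N%:Z) => nc hi.
have e : ((i - n)%N : int) = i%:Z - n%:Z by rewrite subzn.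
rewrite IH e nc; congr (_ %:R); congr pwn.
rewrite mulSn PoszD; lia.
Qed.

Lemma frob (p : nat) (C : {fset int}) (s : int) : prime p -> s \in C ->
  (pwn C p (p%:Z * s))%:R = (1 : 'F_p) /\ (pwn C p 1)%:R = (0 : 'F_p).
Proof.
move=> pp sC; have [N HN] := exN C.
have chp : p \in [pchar {poly 'F_p}] by rewrite pchar_poly pchar_Fp.
have QP : (\sum_(c <- C) 'X^(absz (c + N%:Z)) : {poly 'F_p}) ^+ p
    = \sum_(c <- C) 'X^(absz (c + N%:Z) * p).
  have h := pFrobenius_autE chp (\sum_(c <- C) 'X^(absz (c + N%:Z))).
  rewrite -h.
  rewrite rmorph_sum; apply: eq_bigr => c _.
  by rewrite /= pFrobenius_autE exprM.
have p0 : (0 < p)%N by apply: prime_gt0.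
have nc c : c \in C -> (absz (c + N%:Z))%:Z = c + N%:Z.
  by move=> /HN hc; rewrite gez0_abs //; lia.
split.
  have := coefQk 'F_p HN p (absz (s + N%:Z) * p).
  rewrite QP coef_sum PoszM nc // => h.
  rewrite (_ : p%:Z * s = (s + N%:Z) * p%:Z - (p * N)%N%:Z); last first.
    by rewrite PoszM; ring.
  rewrite -h.
  transitivity (\sum_(c <- C) ((c == s)%:R : 'F_p)).
    2: by rewrite sum_eq_mem ?fset_uniq // sC.
  apply: eq_big_seq => c cC.
  rewrite coefXn; congr (_ %:R).
  rewrite eqn_pmul2r // -eqz_nat nc // nc //.
  by rewrite (inj_eq (addIr _)) eq_sym.
have := coefQk 'F_p HN p (p * N + 1)%N.
rewrite QP coef_sum PoszD PoszM.
have -> : ((p * N)%N%:Z + 1%N%:Z - (p * N)%N%:Z) = 1 by rewrite PoszM; lia.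
move=> <-; apply: big1_seq => c _; rewrite coefXn.
case: eqP => // h; exfalso.
have : (p %| p * N + 1)%N by rewrite h dvdn_mull.
rewrite dvdn_addr ?dvdn_mulr // dvdn1 => /eqP p1.
by move: (prime_gt1 pp); rewrite p1.
Qed.

Lemma natr_inj0 (F : fieldType) (charF0 : [pchar F] =i pred0) (m n : nat) :
  (m%:R : F) = n%:R -> m = n.
Proof.
wlog mn : m n / (m <= n)%N.
  move=> W h; case: (leqP m n) => [mn|nm]; first exact: W.
  by apply/esym/W => //; apply: ltnW.
move=> h; have : ((n - m)%N%:R : F) = 0 by rewrite natrB // h subrr.
case: (posnP (n - m)) => [d0|dp] hd.
  by apply/eqP; rewrite eqn_leq mn /= -subn_eq0 d0.
have [p] := natf0_pchar dp (introT eqP hd).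
by rewrite charF0.
Qed.

Lemma setsum_mulE (F : fieldType) C E g :
  setsum_mul F C E g = \sum_(c <- C) setsum F E (g - c).
Proof.
apply: eq_bigr => c _; rewrite /setsum.
transitivity (\sum_(d <- E) ((d == g - c)%:R : F)).
  apply: eq_bigr => d _.
  have -> : (c + d == g) = (d == g - c) by apply/eqP/eqP => h; lia.
  by [].
by rewrite sum_eq_mem ?fset_uniq.
Qed.

Definition reprb {F : fieldType} (D : {fset int} -> Prop) (f : int -> F) :=
  exists L : seq ({fset int} * F), (forall x, x \in L -> D x.1) /\
    forall g, f g = \sum_(x <- L) x.2 * setsum F x.1 g.

Lemma rep_list (F : fieldType) (D : {fset int} -> Prop) :
  is_schur_partition F D -> forall C, D C ->
  forall L : seq ({fset int} * F), (forall x, x \in L -> D x.1) ->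
  exists L' : seq ({fset int} * F), (forall x, x \in L' -> D x.1) /\
    forall g, \sum_(x <- L) x.2 * setsum_mul F C x.1 g
              = \sum_(y <- L') y.2 * setsum F y.1 g.
Proof.
move=> [_ [_ [_ [_ [_ Hmul]]]]] C DC; elim=> [|[E w] L IH] HL.
  by exists [::]; split => // g; rewrite !big_nil.
have [|L' [HL' eL']] := IH.
  by move=> x xL; apply: HL; rewrite in_cons xL orbT.
have DE : D E by apply: (HL (E, w)); rewrite in_cons eqxx.
have [s [lam [Hs es]]] := Hmul C E DC DE.
exists ([seq (E', w * lam E') | E' <- s] ++ L'); split.
  move=> x; rewrite mem_cat => /orP[/mapP[E' E's ->]|xL'] /=; first exact: Hs.
  exact: HL'.
move=> g; rewrite big_cons big_cat big_map /= eL' es mulr_sumr.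
by congr (_ + _); apply: eq_bigr => E' _; rewrite mulrA.
Qed.

Lemma rep_step (F : fieldType) (D : {fset int} -> Prop) :
  is_schur_partition F D -> forall C, D C -> forall f f' : int -> F,
  reprb D f -> (forall g, f' g = \sum_(c <- C) f (g - c)) -> reprb D f'.
Proof.
move=> HD C DC f f' [L [HL eL]] ef.
have [L' [HL' eL']] := rep_list HD DC HL.
exists L'; split => // g; rewrite ef -eL'.
under eq_bigr => c _ do rewrite eL.
rewrite exchange_big /=; apply: eq_bigr => x _.
by rewrite setsum_mulE mulr_sumr.
Qed.

Lemma rep_const (F : fieldType) (D : {fset int} -> Prop) :
  is_schur_partition F D -> forall f : int -> F, reprb D f ->
  forall X x y, D X -> x \in X -> y \in X -> f x = f y.
Proof.
move=> [_ [_ [Huniq _]]] f [L [HL eL]] X x y DX xX yX.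
rewrite !eL; apply: eq_big_seq => z zL; congr (_ * _); rewrite /setsum.
have DE := HL z zL.
suff -> : (x \in z.1) = (y \in z.1) by [].
apply/idP/idP => h.
  by rewrite (Huniq _ _ _ DE DX h xX).
by rewrite (Huniq _ _ _ DE DX h yX).
Qed.

Lemma pwn_rep (F : fieldType) (D : {fset int} -> Prop) :
  is_schur_partition F D -> forall C, D C -> forall k,
  reprb D (fun g => (pwn C k g)%:R : F).
Proof.
move=> HD C DC; elim=> [|k IH].
  have D0 := HD.2.2.2.1.
  exists [:: ([fset 0%R], 1)]; split.
    by move=> x; rewrite in_cons in_nil orbF => /eqP -> /=.
  by move=> g; rewrite big_cons big_nil addr0 mul1r /setsum in_fset1.
apply: (rep_step HD DC IH) => g /=.
by rewrite natr_sum.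
Qed.

Lemma mul_rep (F : fieldType) (D : {fset int} -> Prop) :
  is_schur_partition F D -> forall A B, D A -> D B ->
  reprb D (setsum_mul F A B).
Proof.
move=> HD A B DA DB.
have [s [lam [Hs es]]] := HD.2.2.2.2.2 A B DA DB.
exists [seq (E, lam E) | E <- s]; split.
  by move=> x /mapP[E Es ->]; apply: Hs.
by move=> g; rewrite es big_map.
Qed.

Lemma sumset_lemma (F : fieldType) (charF0 : [pchar F] =i pred0)
  (D : {fset int} -> Prop) : is_schur_partition F D ->
  forall A B X x y a b, D A -> D B -> D X -> x \in X -> y \in X ->
  a \in A -> b \in B -> x = a + b ->
  exists a' b', [/\ a' \in A, b' \in B & y = a' + b'].
Proof.
move=> HD A B X x y a b DA DB DX xX yX aA bB exab.
have e := rep_const HD (mul_rep HD DA DB) DX xX yX.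
have nE g : setsum_mul F A B g =
   (\sum_(a <- A) \sum_(b <- B) nat_of_bool (a + b == g)%R)%:R.
  by rewrite natr_sum; apply: eq_bigr => a' _; rewrite natr_sum.
move: e; rewrite !nE => /(natr_inj0 charF0) e.
have : (\sum_(a <- A) \sum_(b <- B) nat_of_bool (a + b == y)%R != 0)%N.
  rewrite -e sum_nat_seq_neq0; apply/hasP; exists a => //=.
  rewrite sum_nat_seq_neq0; apply/hasP; exists b => //=.
  by rewrite exab eqxx.
rewrite sum_nat_seq_neq0 => /hasP[a' a'A] /=.
rewrite sum_nat_seq_neq0 => /hasP[b' b'B] /=.
by case: (a' + b' =P y) => // h _; exists a', b'.
Qed.

Lemma inv_mem (C : {fset int}) x : (x \in fset_inv C) = (- x \in C).
Proof.
apply/imfsetP/idP => [[c cC ->]|h]; first by rewrite opprK.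
by exists (- x); rewrite ?opprK.
Qed.

Theorem theorem3p2 (F : fieldType) (charF0 : [pchar F]%R =i pred0)
    (D : {fset int} -> Prop) :
  is_schur_partition F D ->
  (forall C, D C <-> group_ring_partition C) \/
  (forall C, D C <-> symmetric_partition C).
Proof.
move=> HD; have HD' := HD.
move: HD' => [Hne [Hcov [Huniq [H0 [Hinv Hmul]]]]].
have [T [DT T1]] := Hcov 1.
have Tpm : forall t, t \in T -> t = 1 \/ t = -1.
  move=> t tT.
  have [t0|tn0] := eqVneq t 0.
    have e : T = [fset 0] by apply: (Huniq _ _ t) => //; rewrite t0 in_fset1.
    by move: T1; rewrite e in_fset1.
  have [t1|t1] := leqP (absz t) 1%N.
    have : absz t = 1%N.
      by apply/eqP; rewrite eqn_leq t1 absz_gt0 tn0.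
    move=> at1; lia.
  set p := pdiv (absz t).
  have pp : prime p by apply: pdiv_prime.
  have [s ts] : exists s : int, t = p%:Z * s.
    exists (sgz t * (absz t %/ p)%N%:Z).
    rewrite {1}(intEsg t) -{1}(divnK (pdiv_dvd (absz t))) -/p PoszM.
    by ring.
  have [C [DC sC]] := Hcov s.
  have [h1 h0] := frob pp sC.
  have e := rep_const HD (pwn_rep HD DC p) DT tT T1.
  move/(natr_inj0 charF0): e => e.
  by move: h1; rewrite -ts e h0 => /eqP; rewrite eq_sym oner_eq0.
have cls0 : forall X, D X -> 0 \in X -> X = [fset 0].
  by move=> X DX X0; apply: (Huniq _ _ 0) => //; rewrite in_fset1.
have invD : forall X, D X -> D (fset_inv X) by [].
have pm : forall n : nat, forall X, D X -> n%:Z \in X ->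
    forall y, y \in X -> y = n%:Z \/ y = - n%:Z.
  elim/ltn_ind => -[|[|k]] IH X DX nX y yX.
  - by move: yX; rewrite (cls0 X DX nX) in_fset1 => /eqP ->; left.
  - by apply: Tpm; rewrite -(Huniq _ _ 1 DX DT nX T1).
  - have [A [DA kA]] := Hcov (k.+1)%:Z.
    have exab : k.+2%:Z = k.+1%:Z + 1 by lia.
    have [a' [b' [a'A b'T ey]]] :=
      sumset_lemma charF0 HD DA DT DX nX yX kA T1 exab.
    case: (IH k.+1 (ltnSn _) A DA kA a' a'A) => ea; case: (Tpm b' b'T) => eb;
      rewrite ea eb in ey.
    + left; rewrite ey; lia.
    + have ykX : k%:Z \in X by rewrite (_ : k%:Z = y) //; rewrite ey; lia.
      have := IH k (ltnW (ltnSn _)) X DX ykX k.+2%:Z nX; lia.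
    + have ykX : k%:Z \in fset_inv X by rewrite inv_mem (_ : - k%:Z = y) //; rewrite ey; lia.
      have n' : - k.+2%:Z \in fset_inv X by rewrite inv_mem opprK.
      have := IH k (ltnW (ltnSn _)) (fset_inv X) (Hinv _ DX) ykX _ n'; lia.
    + right; rewrite ey; lia.
have pmg : forall X, D X -> forall x y, x \in X -> y \in X -> y = x \/ y = - x.
  move=> X DX x y xX yX.
  have [x0|x0] := lerP 0 x.
    have e : x = (absz x)%:Z by rewrite gez0_abs.
    rewrite e; apply: (pm _ X DX) => //; by rewrite -e.
  have e : - x = (absz x)%:Z by rewrite ltz0_abs.
  have h1 : (absz x)%:Z \in fset_inv X by rewrite inv_mem -e opprK.
  have h2 : - y \in fset_inv X by rewrite inv_mem opprK.
  have := pm _ _ (Hinv _ DX) h1 _ h2; lia.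
case: (boolP (-1 \in T)) => m1T.
  right.
  have symm : forall n : nat, (0 < n)%N -> forall X, D X -> n%:Z \in X -> - n%:Z \in X.
    elim=> [//|[|k] IH] _ X DX nX.
      by rewrite (Huniq _ _ 1 DX DT nX T1).
    apply/negPn/negP => nm.
    have [A [DA kA]] := Hcov (k.+1)%:Z.
    have mA := IH (ltn0Sn _) A DA kA.
    have exab : k.+1%:Z = k.+2%:Z + (-1) by lia.
    have [a' [b' [a'X b'T ey]]] :=
      sumset_lemma charF0 HD DX DT DA kA mA nX m1T exab.
    case: (pmg X DX _ _ nX a'X) => ea; last by rewrite ea in a'X; rewrite a'X in nm.
    case: (Tpm b' b'T) => eb; rewrite ea eb in ey; lia.
  have helper : forall X g, D X -> g \in X -> X = [fset g; - g].
    move=> X g DX gX; apply/fsetP => z; rewrite in_fset2.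
    apply/idP/idP => [zX|/orP[/eqP->|/eqP->]] //.
      by case: (pmg X DX g z gX zX) => ->; rewrite eqxx ?orbT.
    have [g0|g0] := lerP 0 g.
      have [g00|gp] := eqVneq g 0; first by rewrite g00 oppr0 -g00.
      have e : g = (absz g)%:Z by rewrite gez0_abs.
      rewrite e; apply: (symm _ _ X DX); [lia | by rewrite -e].
    have e : - g = (absz g)%:Z by rewrite ltz0_abs.
    have h1 : (absz g)%:Z \in fset_inv X by rewrite inv_mem -e opprK.
    have := symm _ _ _ (Hinv _ DX) h1; rewrite inv_mem -e !opprK; apply; lia.
  move=> C; split => [DC|[g ->]].
    have [g gC] := fset0Pn _ (Hne C DC).
    by exists g; apply: helper.
  have [X [DX gX]] := Hcov g.
  by rewrite -(helper X g DX gX).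
left.
have asym : forall n : nat, (0 < n)%N -> forall X, D X -> n%:Z \in X -> - n%:Z \notin X.
  elim=> [//|[|k] IH] _ X DX nX.
    by rewrite (Huniq _ _ 1 DX DT nX T1).
  apply/negP => nm.
  have [A [DA kA]] := Hcov (k.+1)%:Z.
  have mA := IH (ltn0Sn _) A DA kA.
  have exab : k.+2%:Z = k.+1%:Z + 1 by lia.
  have [a' [b' [a'A b'T ey]]] :=
    sumset_lemma charF0 HD DA DT DX nX nm kA T1 exab.
  case: (Tpm b' b'T) => eb; last by rewrite eb in b'T; rewrite b'T in m1T.
  case: (pmg A DA _ _ kA a'A) => ea; rewrite ea eb in ey; lia.
have helper : forall X g, D X -> g \in X -> X = [fset g].
  move=> X g DX gX; apply/fsetP => z; rewrite in_fset1.
  apply/idP/idP => [zX|/eqP->] //.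
  case: (pmg X DX g z gX zX) => ez; rewrite ez in zX * => //.
  have [g00|gp] := eqVneq g 0; first by rewrite g00 oppr0.
  exfalso.
  have [g0|g0] := lerP 0 g.
    have e : g = (absz g)%:Z by rewrite gez0_abs.
    have := asym (absz g) ltac:(lia) X DX; rewrite -e => /(_ gX).
    by rewrite zX.
  have e : - g = (absz g)%:Z by rewrite ltz0_abs.
  have := asym (absz g) ltac:(lia) X DX; rewrite -e opprK => /(_ zX).
  by rewrite gX.
move=> C; split => [DC|[g ->]].
  have [g gC] := fset0Pn _ (Hne C DC).
  by exists g; apply: helper.
have [X [DX gX]] := Hcov g.
by rewrite -(helper X g DX gX).
Qed.
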